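(* Assume $e_{-1}+e_{+1}<1$ and $\delta_{\tilde p}\neq 0$, and let $$\alpha=1-(1-e_{-1}-e_{+1})\cdot\frac{\delta_p}{\delta_{\tilde p}}.$$ Let $\mathcal F$ be a class of measurable classifiers $f:\mathcal X\to\{-1,+1\}$ and let $\tilde f^*\in\arg\min_{f\in\mathcal F}\mathbb E_{\tilde{\mathcal D}}[\mathbb 1_{\alpha\text{-peer}}(f(X),\tilde Y)]$. Then $\tilde f^*\in\arg\min_{f\in\mathcal F}R_{\mathcal D}(f)$, where $R_{\mathcal D}(f)=\mathbb P_{(X,Y)\sim\mathcal D}(f(X)\neq Y)$.
   Context: Let $\mathcal X\subseteq\mathbb R^d$ and let $(X,Y)$ be a random pair with distribution $\mathcal D$ on $\mathcal X\times\{-1,+1\}$, with $p:=\mathbb P(Y=+1)\in(0,1)$. A noisy label $\tilde Y\in\{-1,+1\}$ is generated with noise rates $e_{+1}:=\mathbb P(\tilde Y=-1\mid Y=+1)$, $e_{-1}:=\mathbb P(\tilde Y=+1\mid Y=-1)$, where $\tilde Y$ is conditionally independent of $X$ given $Y$; $\tilde{\mathcal D}$ is the distribution of $(X,\tilde Y)$. Let $\delta_p:=\mathbb P(Y=+1)-\mathbb P(Y=-1)$ and $\delta_{\tilde p}:=\mathbb P(\tilde Y=+1)-\mathbb P(\tilde Y=-1)$. The 0-1 loss is $\mathbb 1(a,b)=1$ if $a\neq b$ and $0$ otherwise. For a weight $\alpha$, the expected $\alpha$-weighted 0-1 peer loss is $$\mathbb E_{\tilde{\mathcal D}}[\mathbb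 1_{\alpha\text{-peer}}(f(X),\tilde Y)]:=\mathbb E[\mathbb 1(f(X),\tilde Y)]-\alpha\,\mathbb E[\mathbb 1(f(X_1),\tilde Y_2)],$$ where $(X,\tilde Y),(X_1,\tilde Y_1),(X_2,\tilde Y_2)$ are i.i.d. draws from $\tilde{\mathcal D}$. *)

(* Defs.v *)
From HB Require Import structures.
From mathcomp Require Import all_boot all_order all_algebra.
From mathcomp Require Import all_classical all_reals all_analysis.
Set Implicit Arguments. Unset Strict Implicit. Unset Printing Implicit Defensive.
Import Order.TTheory GRing.Theory Num.Theory.
Local Open Scope classical_set_scope.
Local Open Scope ring_scope.

(* Labels {-1,+1} are encoded as bool: true = +1, false = -1.
   0-1 loss: 1(a,b) = 1 iff a <> b. *)

Section Defs.
Context {dO dX : measure_display} {Omega : measurableType dO}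
  {T : measurableType dX} {R : realType}.
Variables (P : probability Omega R) (X : Omega -> T) (Y Yt : Omega -> bool).

Definition prb (A : set Omega) : R := fine (P A).

Definition p_pos : R := prb [set w | Y w = true].

Definition e_pos : R :=
  prb [set w | Yt w = false /\ Y w = true] / prb [set w | Y w = true].
Definition e_neg : R :=
  prb [set w | Yt w = true /\ Y w = false] / prb [set w | Y w = false].

Definition delta_p : R :=
  prb [set w | Y w = true] - prb [set w | Y w = false].
Definition delta_pt : R :=
  prb [set w | Yt w = true] - prb [set w | Yt w = false].

Definition cond_indep : Prop :=
  forall (A : set T) (y b : bool), measurable A ->
    prb [set w | X w \in A /\ Y w = y /\ Yt w = b] * prb [set w | Y w = y]
    = prb [set w | X w \in A /\ Y w = y] * prb [set w | Y w = y /\ Yt w = b].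

Definition Dnoisy : set (T * bool)%type -> \bar R :=
  pushforward P (fun w => (X w, Yt w)).

Definition risk (f : T -> bool) : R := prb [set w | f (X w) != Y w].

Definition noisy_loss (f : T -> bool) : R :=
  fine (Dnoisy [set z | f z.1 != z.2]).

(* E[1(f(X1), Yt2)] with (X1,Yt1),(X2,Yt2) i.i.d. from D~ : the pair
   ((X1,Yt1),(X2,Yt2)) has law D~ (x) D~ *)
Definition peer_term (f : T -> bool) : R :=
  fine ((Dnoisy \x Dnoisy)%E [set z | f z.1.1 != z.2.2]).

Definition peer_loss (alpha : R) (f : T -> bool) : R :=
  noisy_loss f - alpha * peer_term f.

End Defs.

(* Main.v *)
Require Import Defs.
From HB Require Import structures.
From mathcomp Require Import all_boot all_order all_algebra.
From mathcomp Require Import all_classical all_reals all_analysis.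
From mathcomp Require Import ring lra.
Import Order.TTheory GRing.Theory Num.Theory.
Local Open Scope classical_set_scope.
Local Open Scope ring_scope.

Section P.
Context (dO : measure_display) (Omega : measurableType dO) (R : realType)
  (P : probability Omega R).

Lemma prbE (A : set Omega) : measurable A -> P A = (prb P A)%:E.
Proof. by move=> mA; rewrite /prb fineK // fin_num_measure. Qed.

Lemma prb_ext (A B : set Omega) : (forall w, A w <-> B w) -> prb P A = prb P B.
Proof. by move=> h; congr prb; apply/seteqP; split => w /h. Qed.

Lemma prbU (A B : set Omega) : measurable A -> measurable B -> A `&` B = set0 ->
  prb P (A `|` B) = prb P A + prb P B.
Proof.
move=> mA mB AB; rewrite /prb measureU // fineD //; exact: fin_num_measure.
Qed.

Lemma prbT : prb P setT = 1.
Proof. by rewrite /prb probability_setT. Qed.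

Lemma mpre (g : Omega -> bool) b : measurable_fun setT g -> measurable [set w | g w = b].
Proof. move=> mg; have := mg measurableT [set b] I; by rewrite setTI. Qed.

Lemma prb_split (A : set Omega) (h : Omega -> bool) : measurable A -> measurable_fun setT h ->
  prb P A = prb P (A `&` [set w | h w = true]) + prb P (A `&` [set w | h w = false]).
Proof.
move=> mA mh; rewrite -prbU; first 1 last.
- by apply: measurableI => //; exact: mpre.
- by apply: measurableI => //; exact: mpre.
- by apply/seteqP; split => w //= [[_ ->] [_]].
apply: prb_ext => w /=; split; first by case E: (h w); [left|right].
by case=> -[].
Qed.

End P.
Arguments prbT {dO Omega R} P.
Arguments prb_ext {dO Omega R P A B}.
Arguments prbE {dO Omega R P A}.
Arguments prbU {dO Omega R P A B}.
Arguments mpre {dO Omega g} b.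
Arguments prb_split {dO Omega R P A h}.
Section S.
Context (dO dX : measure_display) (Omega : measurableType dO)
  (T : measurableType dX) (R : realType) (P : probability Omega R)
  (X : Omega -> T) (Yt : Omega -> bool)
  (mX : measurable_fun setT X) (mYt : measurable_fun setT Yt).

Let mZ : measurable_fun setT (fun w => (X w, Yt w)) := measurable_fun_pair mX mYt.

Let Dn0 : Dnoisy P X Yt set0 = 0%E.
Proof. by rewrite /Dnoisy /pushforward preimage_set0 measure0. Qed.

Let Dn_ge0 A : (0 <= Dnoisy P X Yt A)%E.
Proof. exact: measure_ge0. Qed.

Let Dn_sa : semi_sigma_additive (Dnoisy P X Yt).
Proof.
move=> F mF tF mUF; rewrite /Dnoisy /pushforward preimage_bigcup.
apply: measure_semi_sigma_additive.
- by move=> n; rewrite -[X in measurable X]setTI; exact: mZ.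
- apply/trivIsetP => /= i j _ _ ij; rewrite -preimage_setI.
  by move/trivIsetP : tF => /(_ _ _ _ _ ij) ->//; rewrite preimage_set0.
- by rewrite -preimage_bigcup -[X in measurable X]setTI; exact: mZ.
Qed.

HB.instance Definition _ := isMeasure.Build _ _ _ (Dnoisy P X Yt) Dn0 Dn_ge0 Dn_sa.

Let Dn_T : Dnoisy P X Yt [set: _] = 1%:E.
Proof. by rewrite /Dnoisy /pushforward preimage_setT probability_setT. Qed.

HB.instance Definition _ := Measure_isProbability.Build _ _ _ (Dnoisy P X Yt) Dn_T.

Lemma peer_rect (A1 A2 : set (T * bool)%type) : measurable A1 -> measurable A2 ->
  ((Dnoisy P X Yt) \x (Dnoisy P X Yt))%E (A1 `*` A2) = (Dnoisy P X Yt A1 * Dnoisy P X Yt A2)%E.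
Proof. move=> h1 h2. exact: product_measure1E. Qed.



Lemma DnE (A : set (T * bool)%type) : measurable A ->
  Dnoisy P X Yt A = (prb P ((fun w => (X w, Yt w)) @^-1` A))%:E.
Proof.
move=> mA; rewrite /Dnoisy /pushforward prbE //.
by rewrite -[X in measurable X]setTI; exact: mZ.
Qed.

Lemma L8 (f : T -> bool) : measurable_fun setT f ->
  peer_term P X Yt f = prb P [set w | f (X w) = true] * prb P [set w | Yt w = false]
    + prb P [set w | f (X w) = false] * prb P [set w | Yt w = true].
Proof.
move=> mf.
have mf1 b : measurable (f @^-1` [set b]) by have := mf measurableT [set b] I; rewrite setTI.
have mA b : measurable ((f @^-1` [set b]) `*` [set: bool]) by exact: measurableX.
have mB (b : bool) : measurable ([set: T] `*` [set b]).
  have hb : measurable [set b] by [].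
  exact: measurableX measurableT hb.
rewrite /peer_term.
rewrite (_ : [set z | _] = ((f @^-1` [set true]) `*` [set: bool]) `*` ([set: T] `*` [set false])
   `|` ((f @^-1` [set false]) `*` [set: bool]) `*` ([set: T] `*` [set true])); last first.
  apply/seteqP; split => -[[x1 y1] [x2 y2]] /=; rewrite /preimage /=.
    by case: (f x1); case: y2 => //= _; [left|right]; do !split.
  by case=> [[[-> _] [_ ->]]|[[-> _] [_ ->]]].
set A1 := (f @^-1` [set true]) `*` [set: bool] `*` ([set: T] `*` [set false]).
set B1 := (f @^-1` [set false]) `*` [set: bool] `*` ([set: T] `*` [set true]).
have E : ((Dnoisy P X Yt) \x (Dnoisy P X Yt))%E (A1 `|` B1) =
   (((Dnoisy P X Yt) \x (Dnoisy P X Yt)) A1 + ((Dnoisy P X Yt) \x (Dnoisy P X Yt)) B1)%E.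
  apply: measureU.
  - exact: measurableX.
  - exact: measurableX.
  - apply/seteqP; split => // -[[x1 y1] [x2 y2]] [[[H1 _] _] [[H2 _] _]].
    by move: H1 H2; rewrite /preimage /= => ->.
rewrite E.
rewrite !peer_rect // !DnE //.
rewrite -!EFinM -EFinD /=.
congr (_ * _ + _ * _); apply: prb_ext => w /=; rewrite /preimage /=; tauto.
Qed.

End S.
Definition alpha_of (R : realFieldType) (p rTT rTF rFT rFF : R) :=
  1 - (1 - rFT / (1 - p) - rTF / p) * ((p - (1 - p)) / ((rTT + rFT) - (rTF + rFF))).
Definition Lf (R : realFieldType) (p rTT rTF rFT rFF sTT sTF sFT sFF : R) :=
  (sTT * rTF / p + sTF * rFF / (1 - p) + sFT * rTT / p + sFF * rFT / (1-p))
  - @alpha_of _ p rTT rTF rFT rFF * ((sTT + sTF) * (rTF + rFF) + (sFT + sFF) * (rTT + rFT)).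

Arguments alpha_of {R}.
Arguments Lf {R}.

Lemma alg (R : realFieldType) (p rTT rTF rFT rFF sTT sTF sFT sFF uTT uTF uFT uFF : R) :
  0 < p -> p < 1 ->
  rTT + rTF = p -> rFT + rFF = 1 - p ->
  sTT + sFT = p -> sTF + sFF = 1 - p ->
  uTT + uFT = p -> uTF + uFF = 1 - p ->
  (rTT + rFT) - (rTF + rFF) != 0 ->
  Lf p rTT rTF rFT rFF sTT sTF sFT sFF - Lf p rTT rTF rFT rFF uTT uTF uFT uFF
  = (1 - rFT / (1 - p) - rTF / p) * ((sTF + sFT) - (uTF + uFT)).
Proof.
move=> p0 p1 h1 h2 h3 h4 h5 h6 hd.
have hp : p != 0 by rewrite gt_eqF.
have hq : 1 - p != 0 by rewrite subr_eq0 eq_sym lt_eqF.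
rewrite /Lf /alpha_of.
have -> : rTT = p - rTF by rewrite -h1; ring.
have -> : rFF = 1 - p - rFT by rewrite -h2; ring.
have -> : sFT = p - sTT by rewrite -h3; ring.
have -> : sFF = 1 - p - sTF by rewrite -h4; ring.
have -> : uFT = p - uTT by rewrite -h5; ring.
have -> : uFF = 1 - p - uTF by rewrite -h6; ring.
move: hd; rewrite (_ : rTT = p - rTF); last by rewrite -h1; ring.
rewrite (_ : rFF = 1 - p - rFT); last by rewrite -h2; ring.
move=> hd.
field.
by rewrite hd hp hq.
Qed.

Section M.
Context (dO dX : measure_display) (Omega : measurableType dO)
  (T : measurableType dX) (R : realType) (P : probability Omega R)
  (X : Omega -> T) (Y Yt : Omega -> bool)
  (mX : measurable_fun setT X) (mY : measurable_fun setT Y)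
  (mYt : measurable_fun setT Yt) (hci : cond_indep P X Y Yt).

Let q y := prb P [set w | Y w = y].
Let r y b := prb P [set w | Y w = y /\ Yt w = b].
Let s (g : Omega -> bool) b1 y := prb P [set w | Y w = y /\ g w = b1].
Let m (g : Omega -> bool) b1 y b := prb P [set w | (Y w = y /\ g w = b1) /\ Yt w = b].

Lemma L1 y : q y = r y true + r y false.
Proof. apply: prb_split => //; exact: mpre. Qed.

Lemma L2 g y : measurable_fun setT g -> q y = s g true y + s g false y.
Proof. move=> mg; apply: prb_split => //; exact: mpre. Qed.

Lemma L3 g b1 y : measurable_fun setT g -> s g b1 y = m g b1 y true + m g b1 y false.
Proof.
move=> mg; apply: prb_split => //; apply: measurableI; exact: mpre.
Qed.

Lemma L5 : q true + q false = 1.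
Proof.
rewrite -(prbT P) (prb_split measurableT mY); congr (_ + _); apply: prb_ext => w /=; tauto.
Qed.

Lemma L6 b : prb P [set w | Yt w = b] = r true b + r false b.
Proof.
rewrite (prb_split (mpre b mYt) mY); congr (_ + _); apply: prb_ext => w /=; tauto.
Qed.

Lemma L4 (f : T -> bool) b1 y b : measurable_fun setT f ->
  m (fun w => f (X w)) b1 y b * q y = s (fun w => f (X w)) b1 y * r y b.
Proof.
move=> mf.
have mA : measurable (f @^-1` [set b1]) by have := mf measurableT [set b1] I; rewrite setTI.
have := hci _ y b mA.
rewrite /m /s /q /r.
rewrite (@prb_ext _ _ _ P [set w | X w \in f @^-1` [set b1] /\ Y w = y /\ Yt w = b]
  [set w | (Y w = y /\ f (X w) = b1) /\ Yt w = b]); last by move=> w /=; rewrite in_setE /=; tauto.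
rewrite (@prb_ext _ _ _ P [set w | X w \in f @^-1` [set b1] /\ Y w = y]
  [set w | Y w = y /\ f (X w) = b1]) //; by move=> w /=; rewrite in_setE /=; tauto.
Qed.


Ltac bc f := let w := fresh "w" in intro w; rewrite /=; case: (f (X w)); case: (Yt w); case: (Y w); split => //=; intuition.

Lemma L7 (f : T -> bool) : measurable_fun setT f ->
  noisy_loss P X Yt f = m (fun w => f (X w)) true true false + m (fun w => f (X w)) true false false
    + m (fun w => f (X w)) false true true + m (fun w => f (X w)) false false true.
Proof.
move=> mf; have mg := measurableT_comp mf mX.
have -> : noisy_loss P X Yt f = prb P [set w | f (X w) != Yt w] by [].
rewrite (@prb_ext _ _ _ P _ ([set w | f (X w) = true /\ Yt w = false] `|` [set w | f (X w) = false /\ Yt w = true])); last first.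
  by bc f.
have mA b1 b : measurable [set w | f (X w) = b1 /\ Yt w = b].
  by apply: measurableI; exact: mpre.
rewrite prbU //; last first.
  by apply/seteqP; split => // w [[H1 _] [H2 _]]; rewrite H1 in H2.
rewrite (prb_split (mA _ _) mY) (prb_split (mA _ _) mY) addrA /m.
by congr (_ + _ + _ + _); apply: prb_ext; bc f.
Qed.

Lemma L9 (f : T -> bool) : measurable_fun setT f ->
  risk P X Y f = s (fun w => f (X w)) true false + s (fun w => f (X w)) false true.
Proof.
move=> mf; have mg := measurableT_comp mf mX.
have -> : risk P X Y f = prb P [set w | f (X w) != Y w] by [].
rewrite (@prb_ext _ _ _ P _ ([set w | Y w = false /\ f (X w) = true] `|` [set w | Y w = true /\ f (X w) = false])); last first.
  by bc f.
rewrite prbU //.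
- by apply: measurableI; exact: mpre.
- by apply: measurableI; exact: mpre.
- by apply/seteqP; split => // w [[H1 _] [H2 _]]; rewrite H1 in H2.
Qed.

Lemma L10 (f : T -> bool) b1 : measurable_fun setT f ->
  prb P [set w | f (X w) = b1] = s (fun w => f (X w)) b1 true + s (fun w => f (X w)) b1 false.
Proof.
move=> mf; have mg := measurableT_comp mf mX.
rewrite (prb_split (mpre b1 mg) mY) /s.
by congr (_ + _); apply: prb_ext; bc f.
Qed.


Lemma eP_eq : e_pos P Y Yt = r true false / q true.
Proof. by rewrite /e_pos; congr (_ / _); apply: prb_ext => w /=; tauto. Qed.

Lemma eN_eq : e_neg P Y Yt = r false true / q false.
Proof. by rewrite /e_neg; congr (_ / _); apply: prb_ext => w /=; tauto. Qed.

Lemma dpt_eq : delta_pt P Yt = (r true true + r false true) - (r true false + r false false).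
Proof. by rewrite /delta_pt !L6. Qed.

Lemma m_eq (f : T -> bool) b1 y b : measurable_fun setT f -> q y != 0 ->
  m (fun w => f (X w)) b1 y b = s (fun w => f (X w)) b1 y * r y b / q y.
Proof. by move=> mf hq; rewrite -L4 // mulfK. Qed.

Lemma main_aux
  (hp0 : 0 < p_pos P Y) (hp1 : p_pos P Y < 1)
  (hnoise : e_neg P Y Yt + e_pos P Y Yt < 1)
  (hdelta : delta_pt P Yt != 0)
  (F : set (T -> bool)) (hF : forall f, F f -> measurable_fun setT f)
  (ft : T -> bool) (hft : F ft)
  (hmin : forall f, F f ->
     peer_loss P X Yt (1 - (1 - e_neg P Y Yt - e_pos P Y Yt)
                           * (delta_p P Y / delta_pt P Yt)) ft
     <= peer_loss P X Yt (1 - (1 - e_neg P Y Yt - e_pos P Y Yt)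
                           * (delta_p P Y / delta_pt P Yt)) f) :
  forall f, F f -> risk P X Y ft <= risk P X Y f.
Proof.
move=> f Ff.
have qT0 : q true != 0 by rewrite gt_eqF.
have qF : q false = 1 - q true by rewrite -L5; ring.
have qF0 : q false != 0 by rewrite qF subr_eq0 eq_sym lt_eqF.
have key h : F h -> peer_loss P X Yt (1 - (1 - e_neg P Y Yt - e_pos P Y Yt)
                           * (delta_p P Y / delta_pt P Yt)) h =
   Lf (q true) (r true true) (r true false) (r false true) (r false false)
     (s (fun w => h (X w)) true true) (s (fun w => h (X w)) true false)
     (s (fun w => h (X w)) false true) (s (fun w => h (X w)) false false).
  move=> Fh; have mh := hF h Fh.
  rewrite /peer_loss L7 // (@L8 _ _ _ _ _ P X Yt mX mYt h mh) !L10 // !m_eq // eP_eq eN_eq dpt_eq.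
  rewrite /Lf /alpha_of /delta_p -/(q true) -/(q false) qF !L6.
  by [].
have hpq := hp0; have hp1' := hp1.
rewrite /p_pos -/(q true) in hpq hp1'.
have hd := hdelta; rewrite dpt_eq in hd.
have E1 : r true true + r true false = q true by rewrite L1.
have E2 : r false true + r false false = 1 - q true by rewrite -qF L1.
have mft := hF ft hft; have mf := hF f Ff.
have := @alg _ _ _ _ _ _ _ _ _ _ _ _ _ _ hpq hp1' E1 E2 (esym (L2 _ true (measurableT_comp mft mX)))
  (etrans (esym (L2 _ false (measurableT_comp mft mX))) qF)
  (esym (L2 _ true (measurableT_comp mf mX)))
  (etrans (esym (L2 _ false (measurableT_comp mf mX))) qF) hd.
rewrite -key // -key // -(L9 _ mft) -(L9 _ mf).
have := hmin f Ff.
rewrite eP_eq eN_eq qF.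
move: hnoise; rewrite eP_eq eN_eq qF => hn.
set c := (1 - _ - _).
have c0 : 0 < c by rewrite /c; lra.
move=> Hle HE.
have : c * (risk P X Y ft - risk P X Y f) <= 0 by rewrite -HE subr_le0.
by rewrite pmulr_rle0 // subr_le0.
Qed.


End M.
Theorem theorem4 (dO dX : measure_display) (Omega : measurableType dO)
  (T : measurableType dX) (R : realType) (P : probability Omega R)
  (X : Omega -> T) (Y Yt : Omega -> bool)
  (mX : measurable_fun setT X) (mY : measurable_fun setT Y)
  (mYt : measurable_fun setT Yt)
  (hp0 : 0 < p_pos P Y) (hp1 : p_pos P Y < 1)
  (hci : cond_indep P X Y Yt)
  (hnoise : e_neg P Y Yt + e_pos P Y Yt < 1)
  (hdelta : delta_pt P Yt != 0)
  (F : set (T -> bool)) (hF : forall f, F f -> measurable_fun setT f)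
  (ft : T -> bool) (hft : F ft)
  (hmin : forall f, F f ->
     peer_loss P X Yt (1 - (1 - e_neg P Y Yt - e_pos P Y Yt)
                           * (delta_p P Y / delta_pt P Yt)) ft
     <= peer_loss P X Yt (1 - (1 - e_neg P Y Yt - e_pos P Y Yt)
                           * (delta_p P Y / delta_pt P Yt)) f) :
  forall f, F f -> risk P X Y ft <= risk P X Y f.
Proof.
exact: (@main_aux _ _ _ _ _ _ _ _ _ mX mY mYt hci hp0 hp1 hnoise hdelta _ hF _ hft hmin).
Qed.
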